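(* Consider a quantum spin system on the $\nu$-dimensional hypercubic lattice with $N$ sites and a finite-dimensional single-site Hilbert space. For $i=0,\dots,m-1$ let $\hat X_{N(i)}=\sum_j\gamma_j(\hat o_{(i)})$, where $\gamma_j$ is the lattice translation by $j$ and $\hat o_{(i)}$ is an $N$-independent self-adjoint local observable, and let $\hat x_{N(i)}=\hat X_{N(i)}/N$. Let $\check{\boldsymbol X}_N=(\check X_{N(0)},\dots,\check X_{N(m-1)})$ be self-adjoint operators with $\lim_{N\to\infty}\|\hat X_{N(i)}-\check X_{N(i)}\|=0$ and $[\check X_{N(i)},\check X_{N(j)}]=0$ for all $i,j$, and $\check x_{N(i)}=\check X_{N(i)}/N$. Let $\eta$ be an $N$-independent polynomial with real coefficients in $m$ noncommutative indeterminates such that $\eta(\hat{\boldsymbol x}_N)$ is self-adjoint for all $N$. For $\dot{\ }\in\{\hat{\ },\check{\ }\}$ define $\psi_N^{\dot\eta}=-\frac1N\log\mathrm{Tr}[e^{-N\eta(\dot{\boldsymbol x}_N)}]$. If $\psi_N^{\hat\eta}$ and $\psi_N^{\check\eta}$ both converge as $N\to\infty$, then $\lim_{N\to\infty}\psi_N^{\hat\eta}=\lim_{N\to\infty}\psi_N^{\check\eta}$.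
   Context: $\|\cdot\|$ is the operator norm. $\psi_N^{\dot\eta}$ is the (finite-size) thermodynamic function of the squeezed ensemble $e^{-N\eta(\dot{\boldsymbol x}_N)}/\mathrm{Tr}[e^{-N\eta(\dot{\boldsymbol x}_N)}]$. *)

(* Defs.v *)
From HB Require Import structures.
From mathcomp Require Import all_boot all_order all_algebra.
From mathcomp Require Import complex.
From mathcomp Require Import all_classical all_reals all_analysis.
Set Implicit Arguments. Unset Strict Implicit. Unset Printing Implicit Defensive.
Import Order.TTheory GRing.Theory Num.Theory numFieldNormedType.Exports.
Local Open Scope classical_set_scope.
Local Open Scope ring_scope.
Local Open Scope complex_scope.

(*   A site of the periodic nu-dimensional hypercubic lattice of side L is   *)
(*   a function 'I_nu -> 'I_L (so N = L ^ nu sites).  A basis configuration  *)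
(*   of the spin system with single-site dimension d is a function           *)
(*   site -> 'I_d; operators on the Hilbert space (C^d)^{(x) N} are square   *)
(*   complex matrices indexed (via enum_rank) by these configurations.       *)
(*   A local observable is an operator on the box {0,..,r-1}^nu.             *)

Definition hdim (nu L d : nat) : nat := #|{ffun {ffun 'I_nu -> 'I_L} -> 'I_d}|.

Definition bdim (nu r d : nat) : nat := #|{ffun {ffun 'I_nu -> 'I_r} -> 'I_d}|.

Section Defs.
Variable R : realType.
Local Notation C := R[i].

Definition adj (n : nat) (A : 'M[C]_n) : 'M[C]_n := \matrix_(i, j) (A j i)^*.
Definition selfadj (n : nat) (A : 'M[C]_n) : Prop := adj A = A.

Definition vnorm2 (n : nat) (v : 'cV[C]_n) : R :=
  \sum_(i < n) complex.Re (v i 0 * (v i 0)^*).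

Definition opnorm (n : nat) (A : 'M[C]_n) : R :=
  sup [set x : R | exists v : 'cV[C]_n,
         vnorm2 v <= 1 /\ x = Num.sqrt (vnorm2 (A *m v))].

Definition mpow (n : nat) (A : 'M[C]_n) (k : nat) : 'M[C]_n :=
  iter k (mulmx A) 1%:M.
Definition expsum (n : nat) (A : 'M[C]_n) (K : nat) : 'M[C]_n :=
  \sum_(k < K) ((k`!)%:R)^-1 *: mpow A k.
Definition mexp (n : nat) (A : 'M[C]_n) : 'M[C]_n :=
  \matrix_(i, j) Complex (limn (fun K => complex.Re (expsum A K i j)))
                         (limn (fun K => complex.Im (expsum A K i j))).

Definition tpos (nu L r : nat) (j : {ffun 'I_nu -> 'I_L.+1})
  (b : {ffun 'I_nu -> 'I_r}) : {ffun 'I_nu -> 'I_L.+1} :=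
  [ffun k => inZp (j k + b k)].

Definition trestr (nu L r d : nat) (j : {ffun 'I_nu -> 'I_L.+1})
  (s : {ffun {ffun 'I_nu -> 'I_L.+1} -> 'I_d}) : {ffun {ffun 'I_nu -> 'I_r} -> 'I_d} :=
  [ffun b => s (tpos j b)].

(* gamma_j(o): the local observable o (acting on the box) translated by j,
   tensored with the identity on the remaining sites *)
Definition transl (nu L r d : nat) (o : 'M[C]_(bdim nu r d))
  (j : {ffun 'I_nu -> 'I_L.+1}) : 'M[C]_(hdim nu L.+1 d) :=
  \matrix_(p, q)
    (let s : {ffun {ffun 'I_nu -> 'I_L.+1} -> 'I_d} := enum_val p in
     let t : {ffun {ffun 'I_nu -> 'I_L.+1} -> 'I_d} := enum_val q in
     if [forall x, (x \notin codom (tpos (r := r) j)) ==> (s x == t x)]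
     then o (enum_rank (trestr r j s)) (enum_rank (trestr r j t))
     else 0).

Definition Xhat (nu L r d : nat) (o : 'M[C]_(bdim nu r d)) : 'M[C]_(hdim nu L.+1 d) :=
  \sum_(j : {ffun 'I_nu -> 'I_L.+1}) transl o j.

Definition Nsites (nu L : nat) : R := ((L.+1) ^ nu)%:R.

(* polynomials with real coefficients in m noncommuting indeterminates:
   finite formal sums of (coefficient, word); a word is a seq of indices *)
Definition ncpoly (m : nat) := seq (R * seq 'I_m).

Definition ncword (m n : nat) (x : 'I_m -> 'M[C]_n) (w : seq 'I_m) : 'M[C]_n :=
  foldr (fun k acc => x k *m acc) 1%:M w.

Definition nceval (m n : nat) (eta : ncpoly m) (x : 'I_m -> 'M[C]_n) : 'M[C]_n :=
  \sum_(t <- eta) (t.1)%:C *: ncword x t.2.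

(* psi = -(1/N) log Tr exp(-N eta(x)) (the trace is real here; we take Re) *)
Definition psiN (n : nat) (N : R) (M : 'M[C]_n) : R :=
  - N^-1 * ln (complex.Re (\tr (mexp (- (N%:C) *: M)))).

End Defs.

(* Main.v *)
Require Import Defs.
From HB Require Import structures.
From mathcomp Require Import all_boot all_order all_algebra.
From mathcomp Require Import complex.
From mathcomp Require Import all_classical all_reals all_analysis.
From mathcomp Require Import ring lra.
Import Order.TTheory GRing.Theory Num.Theory numFieldNormedType.Exports.
Local Open Scope classical_set_scope.
Local Open Scope ring_scope.
Local Open Scope complex_scope.
Set Implicit Arguments. Unset Strict Implicit. Unset Printing Implicit Defensive.

Section P1.
Variable R : realType.
Local Notation C := R[i].

Definition sq (x : C) : R := complex.Re x ^+ 2 + complex.Im x ^+ 2.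
Definition nc (x : C) : R := Num.sqrt (sq x).

Lemma sq_ge0 x : 0 <= sq x.
Proof. by rewrite /sq addr_ge0 // sqr_ge0. Qed.

Lemma nc_ge0 x : 0 <= nc x.
Proof. exact: sqrtr_ge0. Qed.

Lemma nc_sq x : nc x ^+ 2 = sq x.
Proof. by rewrite sqr_sqrtr // sq_ge0. Qed.

Lemma ReMconj (x : C) : complex.Re (x * x^*) = sq x.
Proof. by case: x => a b; rewrite /sq /=; ring. Qed.

Lemma sqM (x y : C) : sq (x * y) = sq x * sq y.
Proof. by case: x => a b; case: y => c e; rewrite /sq /=; ring. Qed.

Lemma ncM (x y : C) : nc (x * y) = nc x * nc y.
Proof. by rewrite /nc sqM sqrtrM // sq_ge0. Qed.

Lemma sq_conj (x : C) : sq (x^*) = sq x.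
Proof. by case: x => a b; rewrite /sq /=; ring. Qed.

Lemma cs2 (a b c e : R) : a * c + b * e <= Num.sqrt (a^+2 + b^+2) * Num.sqrt (c^+2 + e^+2).
Proof.
rewrite -sqrtrM ?addr_ge0 ?sqr_ge0 //.
have [h|h] := lerP (a * c + b * e) 0.
  exact: (le_trans h (sqrtr_ge0 _)).
have e1 : a * c + b * e = Num.sqrt ((a * c + b * e) ^+ 2) by rewrite sqrtr_sqr ger0_norm // ltW.
rewrite [X in X <= _]e1 ler_sqrt; last first.
  by rewrite mulr_ge0 // addr_ge0 // sqr_ge0.
have : 0 <= (a * e - b * c) ^+ 2 by rewrite sqr_ge0.
move=> H; nra.
Qed.

Lemma Re_conjM_le (x y : C) : complex.Re (x^* * y) <= nc x * nc y.
Proof.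
case: x => a b; case: y => c e; rewrite /nc /sq /=.
have -> : a * c - - b * e = a * c + b * e by ring.
exact: cs2.
Qed.

Lemma sqrt_le (a b : R) : 0 <= b -> a <= b ^+ 2 -> Num.sqrt a <= b.
Proof.
move=> hb hab; have e1 : b = Num.sqrt (b ^+ 2) by rewrite sqrtr_sqr ger0_norm.
by rewrite [X in _ <= X]e1 ler_sqrt // sqr_ge0.
Qed.

Lemma ncD (x y : C) : nc (x + y) <= nc x + nc y.
Proof.
apply: sqrt_le; first by rewrite addr_ge0 ?nc_ge0.
rewrite sqrrD !nc_sq.
case: x => a b; case: y => c e; rewrite /sq /nc /sq /=.
have := cs2 a b c e; lra.
Qed.

Lemma ncN (x : C) : nc (- x) = nc x.
Proof. by case: x => a b; rewrite /nc /sq /= !sqrrN. Qed.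

Lemma nc_real (a : R) : nc (a%:C) = `|a|.
Proof. by rewrite /nc /sq /= expr0n /= addr0 sqrtr_sqr. Qed.

Lemma Re_le_nc (x : C) : complex.Re x <= nc x.
Proof.
case: x => a b; rewrite /nc /sq /=.
have [h|h] := lerP a 0; first exact: (le_trans h (sqrtr_ge0 _)).
have e1 : a = Num.sqrt (a ^+ 2) by rewrite sqrtr_sqr ger0_norm // ltW.
rewrite [X in X <= _]e1 ler_sqrt ?addr_ge0 ?sqr_ge0 //.
by rewrite lerDl sqr_ge0.
Qed.

Lemma sq_eq0 (x : C) : sq x = 0 -> x = 0.
Proof.
case: x => a b; rewrite /sq /= => /eqP; rewrite paddr_eq0 ?sqr_ge0 // !sqrf_eq0.
by case/andP => /eqP -> /eqP ->.
Qed.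

Lemma cs_sum (n : nat) (f g : 'I_n -> R) :
  (\sum_i f i * g i) ^+ 2 <= (\sum_i f i ^+ 2) * (\sum_i g i ^+ 2).
Proof.
have H : 0 <= \sum_i \sum_j (f i * g j - f j * g i) ^+ 2.
  by apply: sumr_ge0 => i _; apply: sumr_ge0 => j _; apply: sqr_ge0.
have E : forall i, \sum_j (f i * g j - f j * g i) ^+ 2 =
   (f i ^+ 2) * (\sum_j g j ^+ 2) + (g i ^+ 2) * (\sum_j f j ^+ 2)
   - 2%:R * (f i * g i) * (\sum_j f j * g j).
  move=> i; rewrite !mulr_sumr -big_split -sumrB; apply: eq_bigr => j _.
  rewrite /=; ring.
rewrite (eq_bigr _ (fun i _ => E i)) sumrB big_split /= -!mulr_suml in H.
set A := \sum_i f i ^+ 2 in H *; set B := \sum_i g i ^+ 2 in H *.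
set D := \sum_i f i * g i in H *.
rewrite -mulr_sumr in H.
have -> : D ^+ 2 = D * D by rewrite expr2.
rewrite [B * A]mulrC in H.
move: H; set P := A * B; set Q := D * D.
have -> : 2%:R * D * D = 2%:R * Q by rewrite /Q mulrA.
lra.
Qed.

Lemma cs_sqrt (n : nat) (f g : 'I_n -> R) :
  \sum_i f i * g i <= Num.sqrt (\sum_i f i ^+ 2) * Num.sqrt (\sum_i g i ^+ 2).
Proof.
have [h|h] := lerP (\sum_i f i * g i) 0.
  by apply: (le_trans h); rewrite mulr_ge0 // sqrtr_ge0.
rewrite -sqrtrM; last by apply: sumr_ge0 => i _; apply: sqr_ge0.
have e1 : \sum_i f i * g i = Num.sqrt ((\sum_i f i * g i) ^+ 2) by rewrite sqrtr_sqr ger0_norm // ltW.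
rewrite [X in X <= _]e1 ler_sqrt ?cs_sum //.
by rewrite mulr_ge0 //; apply: sumr_ge0 => i _; apply: sqr_ge0.
Qed.

End P1.

Section P2.
Variable R : realType.
Local Notation C := R[i].

Lemma sqr_le (a b : R) : 0 <= a -> a <= b -> a ^+ 2 <= b ^+ 2.
Proof. move=> ha hab; rewrite !expr2 ler_pM //. Qed.

Definition nv n (v : 'cV[C]_n) := Num.sqrt (vnorm2 v).

Lemma vnorm2E n (v : 'cV[C]_n) : vnorm2 v = \sum_i sq (v i 0).
Proof. by apply: eq_bigr => i _; rewrite ReMconj. Qed.

Lemma vnorm2_ge0 n (v : 'cV[C]_n) : 0 <= vnorm2 v.
Proof. by rewrite vnorm2E sumr_ge0 // => i _; apply: sq_ge0. Qed.

Lemma nv_ge0 n (v : 'cV[C]_n) : 0 <= nv v.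
Proof. exact: sqrtr_ge0. Qed.

Lemma nv_sq n (v : 'cV[C]_n) : nv v ^+ 2 = vnorm2 v.
Proof. by rewrite sqr_sqrtr // vnorm2_ge0. Qed.

Lemma nc_sum (I : Type) (r : seq I) (P : pred I) (F : I -> C) :
  nc (\sum_(i <- r | P i) F i) <= \sum_(i <- r | P i) nc (F i).
Proof.
apply: (big_ind2 (fun x y => nc x <= y)).
- by rewrite /nc /sq /= expr0n /= addr0 sqrtr0.
- by move=> x1 x2 y1 y2 h1 h2; apply: (le_trans (ncD _ _)); apply: lerD.
- by [].
Qed.

Lemma nvD n (u w : 'cV[C]_n) : nv (u + w) <= nv u + nv w.
Proof.
apply: sqrt_le; first by rewrite addr_ge0 ?nv_ge0.
rewrite vnorm2E.
apply: (@le_trans _ _ (\sum_i (nc (u i 0) + nc (w i 0)) ^+ 2)).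
  apply: ler_sum => i _; rewrite mxE -nc_sq; apply: sqr_le; first exact: nc_ge0.
  exact: ncD.
have E : \sum_i (nc (u i 0) + nc (w i 0)) ^+ 2 = \sum_i nc (u i 0) ^+ 2 +
   2%:R * \sum_i nc (u i 0) * nc (w i 0) + \sum_i nc (w i 0) ^+ 2.
  rewrite mulr_sumr -!big_split; apply: eq_bigr => i _ /=; ring.
rewrite E.
have Hu : \sum_i nc (u i 0) ^+ 2 = nv u ^+ 2.
  by rewrite nv_sq vnorm2E; apply: eq_bigr => i _; rewrite nc_sq.
have Hw : \sum_i nc (w i 0) ^+ 2 = nv w ^+ 2.
  by rewrite nv_sq vnorm2E; apply: eq_bigr => i _; rewrite nc_sq.
have := cs_sqrt (fun i => nc (u i 0)) (fun i => nc (w i 0)).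
rewrite /= Hu Hw !sqrtr_sqr !ger0_norm ?nv_ge0 // => H.
rewrite sqrrD; lra.
Qed.

Lemma nvZ n (c : C) (v : 'cV[C]_n) : nv (c *: v) = nc c * nv v.
Proof.
rewrite /nv /nc -sqrtrM ?sq_ge0 // !vnorm2E mulr_sumr.
by congr Num.sqrt; apply: eq_bigr => i _; rewrite mxE sqM.
Qed.

Lemma nc_N1 : nc (-1 : C) = 1.
Proof. by rewrite ncN /nc /sq /= expr1n expr0n /= addr0 sqrtr1. Qed.

Lemma nvN n (v : 'cV[C]_n) : nv (- v) = nv v.
Proof. by rewrite -scaleN1r nvZ nc_N1 mul1r. Qed.

Lemma nv0 n : nv (0 : 'cV[C]_n) = 0.
Proof.
rewrite /nv vnorm2E big1 ?sqrtr0 // => i _.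
by rewrite mxE /sq /= expr0n /= addr0.
Qed.

Lemma nv_eq0 n (v : 'cV[C]_n) : nv v = 0 -> v = 0.
Proof.
move=> /eqP; rewrite sqrtr_eq0 vnorm2E => h.
have h0 : \sum_i sq (v i 0) = 0.
  by apply/eqP; rewrite eq_le h sumr_ge0 // => i _; apply: sq_ge0.
apply/matrixP => i j; rewrite ord1 mxE; apply: sq_eq0.
move/eqP: h0; rewrite psumr_eq0 => [/allP /(_ i) |i0 _]; last exact: sq_ge0.
by rewrite mem_index_enum => /(_ isT) /implyP /(_ isT) /eqP.
Qed.

Lemma nc_entry_le n (v : 'cV[C]_n) i : nc (v i 0) <= nv v.
Proof.
rewrite /nc /nv ler_sqrt ?vnorm2_ge0 // vnorm2E.
rewrite (bigD1 i) //= lerDl; apply: sumr_ge0 => j _; exact: sq_ge0.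
Qed.

Lemma sum_sq_le n (f : 'I_n -> R) : (forall i, 0 <= f i) ->
  \sum_i f i ^+ 2 <= (\sum_i f i) ^+ 2.
Proof.
move=> hf; rewrite [X in _ <= X]expr2 mulr_suml; apply: ler_sum => i _.
rewrite mulr_sumr (bigD1 i) //= expr2 lerDl.
by apply: sumr_ge0 => j _; rewrite mulr_ge0.
Qed.

Definition Kb n (A : 'M[C]_n) : R := \sum_i \sum_j nc (A i j).

Lemma nv_mul_crude n (A : 'M[C]_n) (v : 'cV[C]_n) : nv (A *m v) <= Kb A * nv v.
Proof.
rewrite /nv vnorm2E.
apply: (@le_trans _ _ (Num.sqrt ((\sum_i (\sum_j nc (A i j)) * nv v) ^+ 2))).
  rewrite ler_sqrt ?sqr_ge0 //.
  apply: (@le_trans _ _ (\sum_i ((\sum_j nc (A i j)) * nv v) ^+ 2)).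
    apply: ler_sum => i _; rewrite mxE -nc_sq; apply: sqr_le; first exact: nc_ge0.
    apply: (le_trans (nc_sum _ _ _)); rewrite mulr_suml; apply: ler_sum => j _.
    by rewrite ncM ler_wpM2l ?nc_ge0 // nc_entry_le.
  have hp : forall i, 0 <= (\sum_j nc (A i j)) * nv v.
    by move=> i; rewrite mulr_ge0 ?nv_ge0 // sumr_ge0 // => j _; exact: nc_ge0.
  exact: sum_sq_le.
rewrite sqrtr_sqr mulr_suml ger0_norm //.
by apply: sumr_ge0 => i _; rewrite mulr_ge0 ?nv_ge0 // sumr_ge0 // => j _; exact: nc_ge0.
Qed.

End P2.

Section P3.
Variable R : realType.
Local Notation C := R[i].

Definition opset n (A : 'M[C]_n) := [set x : R | exists v : 'cV[C]_n,
         vnorm2 v <= 1 /\ x = Num.sqrt (vnorm2 (A *m v))].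

Lemma opnormE n (A : 'M[C]_n) : opnorm A = sup (opset A).
Proof. by []. Qed.

Lemma opset0 n (A : 'M[C]_n) : opset A 0.
Proof.
exists 0; split; first by rewrite vnorm2E big1 ?ler01 // => i _; rewrite mxE /sq /= expr0n /= addr0.
by rewrite mulmx0 -/(nv _) nv0.
Qed.

Lemma opset_sup n (A : 'M[C]_n) : has_sup (opset A).
Proof.
split; first by exists 0; exact: opset0.
exists (Kb A) => x [v [hv ->]].
rewrite -/(nv _); apply: (le_trans (nv_mul_crude _ _)).
rewrite ler_piMr //; first by apply: sumr_ge0 => i _; apply: sumr_ge0 => j _; exact: nc_ge0.
by rewrite /nv -sqrtr1 ler_sqrt.
Qed.

Lemma op_ub n (A : 'M[C]_n) v : vnorm2 v <= 1 -> nv (A *m v) <= opnorm A.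
Proof. by move=> hv; apply: (sup_upper_bound (opset_sup A)); exists v. Qed.

Lemma op_le n (A : 'M[C]_n) K :
  (forall v, vnorm2 v <= 1 -> nv (A *m v) <= K) -> opnorm A <= K.
Proof.
move=> h; apply: ge_sup; first by exists 0; exact: opset0.
by move=> x [v [hv ->]]; apply: h.
Qed.

Lemma op_ge0 n (A : 'M[C]_n) : 0 <= opnorm A.
Proof. exact: (sup_upper_bound (opset_sup A) (opset0 A)). Qed.

Lemma op_bound n (A : 'M[C]_n) v : nv (A *m v) <= opnorm A * nv v.
Proof.
have [h0|hpos] := eqVneq (nv v) 0.
  by rewrite h0 (nv_eq0 h0) mulmx0 nv0 mulr0.
have hp : 0 < nv v by rewrite lt_neqAle eq_sym hpos nv_ge0.
set s := nv v.
have hw : vnorm2 ((s^-1)%:C *: v) <= 1.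
  have hs : 0 <= s^-1 by rewrite invr_ge0 ltW.
  by rewrite -nv_sq nvZ nc_real (ger0_norm hs) mulVf // expr1n.
have hs : 0 <= s^-1 by rewrite invr_ge0 ltW.
have := op_ub A hw; rewrite -scalemxAr nvZ nc_real (ger0_norm hs).
by rewrite ler_pdivrMl // mulrC.
Qed.

Lemma op_add n (A B : 'M[C]_n) : opnorm (A + B) <= opnorm A + opnorm B.
Proof.
apply: op_le => v hv; rewrite mulmxDl; apply: (le_trans (nvD _ _)).
by apply: lerD; apply: op_ub.
Qed.

Lemma op_mul n (A B : 'M[C]_n) : opnorm (A *m B) <= opnorm A * opnorm B.
Proof.
apply: op_le => v hv; rewrite -mulmxA; apply: (le_trans (op_bound _ _)).
rewrite ler_wpM2l ?op_ge0 //; exact: op_ub.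
Qed.

Lemma op_scale n (c : C) (A : 'M[C]_n) : opnorm (c *: A) <= nc c * opnorm A.
Proof.
apply: op_le => v hv; rewrite -scalemxAl nvZ ler_wpM2l ?nc_ge0 //; exact: op_ub.
Qed.

Lemma op_opp n (A : 'M[C]_n) : opnorm (- A) = opnorm A.
Proof.
apply/eqP; rewrite eq_le; apply/andP; split.
  by rewrite -scaleN1r; apply: (le_trans (op_scale _ _)); rewrite nc_N1 mul1r.
by rewrite -{1}(opprK A) -scaleN1r; apply: (le_trans (op_scale _ _)); rewrite nc_N1 mul1r.
Qed.

Lemma op_subC n (A B : 'M[C]_n) : opnorm (A - B) = opnorm (B - A).
Proof. by rewrite -op_opp opprB. Qed.

Lemma op0 n : opnorm (0 : 'M[C]_n) = 0.
Proof.
apply/eqP; rewrite eq_le op_ge0 andbT; apply: op_le => v _.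
by rewrite mul0mx nv0.
Qed.

Lemma op1 n : opnorm (1%:M : 'M[C]_n) <= 1.
Proof. apply: op_le => v hv; rewrite mul1mx /nv -sqrtr1 ler_sqrt //. Qed.

Lemma op_sum n (I : Type) (r : seq I) (P : pred I) (F : I -> 'M[C]_n) :
  opnorm (\sum_(i <- r | P i) F i) <= \sum_(i <- r | P i) opnorm (F i).
Proof.
apply: (big_ind2 (fun x y => opnorm x <= y)).
- by rewrite op0.
- by move=> x1 x2 y1 y2 h1 h2; apply: (le_trans (op_add _ _)); apply: lerD.
- by [].
Qed.

End P3.

Section P4.
Variable R : realType.
Local Notation C := R[i].

Lemma exp_cvg (x : R) : series (exp_coeff x) n @[n --> \oo] --> expR x.
Proof.
rewrite expRE /=.
have -> : pseries (fun n => n`!%:R^-1) x = series (exp_coeff x).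
  by rewrite /pseries exp_coeffE.
exact: is_cvg_series_exp_coeff.
Qed.

Lemma cvg_sumR (n : nat) (u : 'I_n -> nat -> R) (l : 'I_n -> R) :
  (forall i, u i k @[k --> \oo] --> l i) -> (\sum_i u i k) @[k --> \oo] --> \sum_i l i.
Proof. move=> h; apply: cvg_big => //; exact: pseudometric_normed_Zmodule.add_continuous. Qed.

Lemma mpow_conj n (P Q D : 'M[C]_n) k : P *m Q = 1%:M -> Q *m P = 1%:M ->
  mpow (Q *m D *m P) k = Q *m mpow D k *m P.
Proof.
move=> PQ QP; elim: k => [|k IH] /=; first by rewrite /mpow /= mulmx1 QP.
rewrite /mpow /= -/(mpow _ k) IH.
by rewrite !mulmxA -[Q *m D *m P *m Q](mulmxA) PQ mulmx1.
Qed.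

Lemma mpow_diag n (d : 'rV[C]_n) k : mpow (diag_mx d) k = diag_mx (\row_j (d 0 j ^+ k)).
Proof.
elim: k => [|k IH].
  rewrite /mpow /=; apply/matrixP => i j; rewrite !mxE expr0.
  by case: eqP.
rewrite /mpow /= -/(mpow _ k) IH mulmx_diag; congr diag_mx.
by apply/rowP => j; rewrite !mxE exprS.
Qed.

Lemma Re_realM (z : C) (a : R) : complex.Re (z * a%:C) = complex.Re z * a.
Proof. by case: z => x y /=; rewrite mulr0 subr0. Qed.

Lemma Re_sum (I : Type) (r : seq I) (P : pred I) (F : I -> C) :
  complex.Re (\sum_(i <- r | P i) F i) = \sum_(i <- r | P i) complex.Re (F i).
Proof.
apply: (big_ind2 (fun a b => complex.Re a = b)) => //.
by move=> a1 b1 a2 b2 <- <-; case: a1 => ? ?; case: a2.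
Qed.

Lemma fact_C (k : nat) : ((k`!)%:R^-1 : C) = ((k`!)%:R^-1 : R)%:C.
Proof.
have := fmorphV (real_complex R) ((k`!)%:R); rewrite rmorph_nat => ->.
by [].
Qed.

Lemma expsum_entry n (P Q : 'M[C]_n) (x : 'I_n -> R) K i :
  P *m Q = 1%:M -> Q *m P = 1%:M ->
  complex.Re (expsum (Q *m diag_mx (\row_l (x l)%:C) *m P) K i i) =
  \sum_l complex.Re (Q i l * P l i) * series (exp_coeff (x l)) K.
Proof.
move=> PQ QP; rewrite /expsum summxE Re_sum.
under eq_bigr do rewrite mpow_conj // mpow_diag mxE.
have E : forall k : 'I_K, complex.Re ((k`!)%:R^-1 *
   (Q *m diag_mx (\row_j ((\row_l (x l)%:C) 0 j ^+ k)) *m P) i i) =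
   \sum_l complex.Re (Q i l * P l i) * ((k`!)%:R^-1 * x l ^+ k).
  move=> k; rewrite mxE mulr_sumr Re_sum; apply: eq_bigr => l _.
  rewrite mul_mx_diag !mxE fact_C -rmorphXn /=.
  rewrite [X in complex.Re X](_ : _ = Q i l * P l i * ((k`!)%:R^-1 * x l ^+ k)%:C).
    by rewrite Re_realM.
  by rewrite rmorphM /=; ring.
under eq_bigr do rewrite E.
rewrite exchange_big /=; apply: eq_bigr => l _.
rewrite -mulr_sumr /series /= big_mkord; congr (_ * _).
by apply: eq_bigr => k _; rewrite exp_coeffE.
Qed.

Lemma trexp_diag n (P Q : 'M[C]_n) (x : 'I_n -> R) :
  P *m Q = 1%:M -> Q *m P = 1%:M ->
  complex.Re (\tr (mexp (Q *m diag_mx (\row_l (x l)%:C) *m P))) = \sum_l expR (x l).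
Proof.
move=> PQ QP; rewrite /mxtrace Re_sum.
have E : forall i, complex.Re (mexp (Q *m diag_mx (\row_l (x l)%:C) *m P) i i) =
   \sum_l complex.Re (Q i l * P l i) * expR (x l).
  move=> i; rewrite mxE /=.
  apply: cvg_lim => //.
  under eq_fun do rewrite expsum_entry //.
  apply: cvg_sumR => l; apply: cvgMr; exact: exp_cvg.
under eq_bigr do rewrite E.
rewrite exchange_big /=; apply: eq_bigr => l _.
rewrite -mulr_suml -Re_sum.
have -> : \sum_i Q i l * P l i = 1.
  have := congr1 (fun M : 'M[C]_n => M l l) PQ; rewrite !mxE eqxx /= => H.
  rewrite -[RHS]H; by apply: eq_bigr => i _; rewrite mulrC.
by rewrite mul1r.
Qed.

End P4.

Section P5.
Variable R : realType.
Local Notation C := R[i].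

Lemma adjE n (A : 'M[C]_n) : adj A = map_mx Num.conj A^T.
Proof. by apply/matrixP => i j; rewrite !mxE. Qed.

Lemma adj_mul n (A B : 'M[C]_n) : adj (A *m B) = adj B *m adj A.
Proof. by rewrite !adjE trmx_mul map_mxM. Qed.

Lemma adjK n (A : 'M[C]_n) : adj (adj A) = A.
Proof. by apply/matrixP => i j; rewrite !mxE conjcK. Qed.

Lemma spec_decomp n (H : 'M[C]_n) : selfadj H -> exists (P : 'M[C]_n) (x : 'I_n -> R),
  [/\ P *m adj P = 1%:M, adj P *m P = 1%:M & H = adj P *m diag_mx (\row_l (x l)%:C) *m P].
Proof.
move=> hH.
have hh : H \is hermsymmx.
  rewrite qualifE /= expr0 scale1r; apply/eqP.
  by rewrite -[LHS]hH adjE.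
set P := spectralmx H.
have PU : P *m adj P = 1%:M.
  by rewrite adjE; apply/unitarymxP; exact: spectral_unitarymx.
exists P, (fun l => complex.Re (spectral_diag H 0 l)); split => //.
  exact: mulmx1C.
have E := orthomx_spectralP (hermitian_normalmx hh).
have Einv : invmx P = adj P.
  by rewrite adjE; exact: (invmx_unitary (spectral_unitarymx H)).
have Esp : spectral_diag H = \row_l (complex.Re (spectral_diag H 0 l))%:C.
  apply/rowP => l; rewrite mxE RRe_real //.
  by move/mxOverP: (hermitian_spectral_diag_real hh) => /(_ 0 l).
rewrite -Esp -Einv; exact: E.
Qed.

Lemma jensen_exp n (w mu : 'I_n -> R) : (forall j, 0 <= w j) -> \sum_j w j = 1 ->
  expR (\sum_j w j * mu j) <= \sum_j w j * expR (mu j).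
Proof.
move=> w0 w1; set c := \sum_j w j * mu j.
have H : forall j, w j * expR c * (1 + (mu j - c)) <= w j * expR (mu j).
  move=> j; have -> : mu j = c + (mu j - c) by ring.
  rewrite expRD -mulrA ler_wpM2l // ler_wpM2l ?expR_ge0 //.
  have -> : c + (mu j - c) - c = mu j - c by ring.
  exact: expR_ge1Dx.
apply: (le_trans _ (ler_sum _ (fun j _ => H j))).
have -> : \sum_j w j * expR c * (1 + (mu j - c)) =
  expR c * (\sum_j w j + \sum_j w j * mu j - c * \sum_j w j).
  rewrite [c * _]mulr_sumr -big_split -sumrB [RHS]mulr_sumr; apply: eq_bigr => j _ /=; ring.
by rewrite w1 -/c mulr1 addrK mulr1.
Qed.

Lemma ReMconj' (x : C) : complex.Re (x^* * x) = sq x.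
Proof. by rewrite mulrC ReMconj. Qed.

Lemma unit_rows n (W : 'M[C]_n) : W *m adj W = 1%:M -> forall l, \sum_j sq (W l j) = 1.
Proof.
move=> h l; have := congr1 (fun M : 'M[C]_n => complex.Re (M l l)) h.
rewrite !mxE eqxx /= Re_sum => <-; apply: eq_bigr => j _.
by rewrite !mxE ReMconj.
Qed.

Lemma quad_bound n (D P : 'M[C]_n) l : P *m adj P = 1%:M ->
  complex.Re ((P *m D *m adj P) l l) <= opnorm D.
Proof.
move=> PU.
set u : 'cV[C]_n := col l (adj P).
have hu : vnorm2 u = 1.
  rewrite vnorm2E -(unit_rows PU l); apply: eq_bigr => a _.
  by rewrite !mxE sq_conj.
have E : (P *m D *m adj P) l l = \sum_a (u a 0)^* * (D *m u) a 0.
  rewrite -mulmxA mxE; apply: eq_bigr => a _.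
  by rewrite /u !mxE conjCK; congr (_ * _); apply: eq_bigr => b _; rewrite !mxE.
rewrite E Re_sum.
apply: (@le_trans _ _ (\sum_a nc (u a 0) * nc ((D *m u) a 0))).
  by apply: ler_sum => a _; apply: Re_conjM_le.
have hs : forall v : 'cV[C]_n, Num.sqrt (\sum_i nc (v i 0) ^+ 2) = nv v.
  by move=> v; rewrite /nv vnorm2E; congr Num.sqrt; apply: eq_bigr => i _; rewrite nc_sq.
apply: (le_trans (cs_sqrt (fun a => nc (u a 0)) (fun a => nc ((D *m u) a 0)))).
rewrite !hs.
have nu1 : nv u = 1 by rewrite /nv hu sqrtr1.
rewrite nu1 mul1r; apply: (le_trans (op_bound _ _)); by rewrite nu1 mulr1.
Qed.

Lemma ReD (x y : C) : complex.Re (x + y) = complex.Re x + complex.Re y.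
Proof. by case: x => ? ?; case: y. Qed.

Lemma unit_cols n (W : 'M[C]_n) : adj W *m W = 1%:M -> forall j, \sum_l sq (W l j) = 1.
Proof.
move=> h j; have := congr1 (fun M : 'M[C]_n => complex.Re (M j j)) h.
rewrite !mxE eqxx /= Re_sum => <-; apply: eq_bigr => l _.
by rewrite !mxE ReMconj'.
Qed.

Theorem trexp_lip n (X Y : 'M[C]_n) : selfadj X -> selfadj Y ->
  complex.Re (\tr (mexp Y)) <= expR (opnorm (Y - X)) * complex.Re (\tr (mexp X)).
Proof.
move=> hX hY.
have [Q [mu [QU UQ EX]]] := spec_decomp hX.
have [P [lam [PU UP EY]]] := spec_decomp hY.
have hlam_eq : forall l, (lam l)%:C = (P *m Y *m adj P) l l.
  move=> l; rewrite EY !mulmxA PU mul1mx -mulmxA PU mulmx1 !mxE eqxx /=.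
  by rewrite mulr1n.
set W := P *m adj Q.
have WU : W *m adj W = 1%:M.
  by rewrite /W adj_mul adjK mulmxA -[P *m adj Q *m Q]mulmxA UQ mulmx1.
have UW : adj W *m W = 1%:M.
  by rewrite /W adj_mul adjK mulmxA -[Q *m adj P *m P]mulmxA UP mulmx1.
have hlam : forall l, lam l <= opnorm (Y - X) + \sum_j sq (W l j) * mu j.
  move=> l.
  have e2 : P *m Y *m adj P = P *m (Y - X) *m adj P + W *m diag_mx (\row_j (mu j)%:C) *m adj W.
    have -> : W *m diag_mx (\row_j (mu j)%:C) *m adj W = P *m X *m adj P.
      by rewrite [in RHS]EX /W adj_mul adjK !mulmxA.
    by rewrite -mulmxDl -mulmxDr subrK.
  have := congr1 (fun M : 'M[C]_n => complex.Re (M l l)) e2.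
  rewrite /= -hlam_eq /= => ->.
  rewrite mxE ReD; apply: lerD; first exact: quad_bound.
  rewrite le_eqVlt; apply/orP; left; apply/eqP.
  rewrite mxE Re_sum; apply: eq_bigr => j _.
  rewrite mul_mx_diag !mxE [_ * (mu j)%:C * _]mulrC mulrA [_^* * _]mulrC.
  by rewrite Re_realM ReMconj mulrC.
have TY : complex.Re (\tr (mexp Y)) = \sum_l expR (lam l).
  rewrite [in LHS]EY. by apply: trexp_diag.

have TX : complex.Re (\tr (mexp X)) = \sum_l expR (mu l).
  by rewrite [in LHS]EX; apply: trexp_diag.

suff HH : \sum_l expR (lam l) <= expR (opnorm (Y - X)) * \sum_l expR (mu l).
  by move: HH; rewrite -TY -TX.

apply: (@le_trans _ _ (\sum_l expR (opnorm (Y - X)) * \sum_j sq (W l j) * expR (mu j))).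
  apply: ler_sum => l _. 
  apply: (le_trans (y := expR (opnorm (Y - X) + \sum_j sq (W l j) * mu j))).
    by rewrite ler_expR.
  rewrite expRD ler_wpM2l ?expR_ge0 //.
  apply: jensen_exp; first by move=> j; exact: sq_ge0.
  exact: unit_rows.
rewrite -mulr_sumr exchange_big /= ler_wpM2l ?expR_ge0 //.
apply: ler_sum => j _; rewrite -mulr_suml unit_cols // mul1r.
by [].
Qed.

End P5.

Section P6.
Variable R : realType.
Local Notation C := R[i].

Lemma selfadj_scale n (a : R) (M : 'M[C]_n) : selfadj M -> selfadj (a%:C *: M).
Proof.
move=> h; rewrite /selfadj; apply/matrixP => i j.
rewrite !mxE -[in RHS]h !mxE.
case: (M j i) => x y; apply/eqP; rewrite eq_complex /=; apply/andP; split; apply/eqP; ring.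
Qed.

Lemma selfadj_add n (M1 M2 : 'M[C]_n) : selfadj M1 -> selfadj M2 -> selfadj (M1 + M2).
Proof.
move=> h1 h2; rewrite /selfadj; apply/matrixP => i j.
by rewrite !mxE -[in RHS]h1 -[in RHS]h2 !mxE rmorphD.
Qed.

Lemma trexp_pos n (X : 'M[C]_n) : (0 < n)%N -> selfadj X -> 0 < complex.Re (\tr (mexp X)).
Proof.
move=> hn hX; have [P [x [PU UP E]]] := spec_decomp hX.
have -> : complex.Re (\tr (mexp X)) = \sum_l expR (x l).
  by rewrite [in LHS]E; apply: trexp_diag.
rewrite (bigD1 (Ordinal hn)) //= ltr_pwDl ?expR_gt0 //.
by apply: sumr_ge0 => i _; exact: expR_ge0.
Qed.

Lemma ln_lip (a b d : R) : 0 < a -> 0 < b -> a <= expR d * b -> ln a <= d + ln b.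
Proof.
move=> ha hb h.
have hp : 0 < expR d * b by rewrite mulr_gt0 ?expR_gt0.
rewrite -(expRK d) -lnM ?posrE ?expR_gt0 //.
by rewrite ler_ln ?posrE.
Qed.

Lemma psi_core (N tX tY d : R) : 0 < N -> 0 < tX -> 0 < tY ->
  tY <= expR (N * d) * tX -> - N^-1 * ln tX - - N^-1 * ln tY <= d.
Proof.
move=> hN pX pY h2.
have hl := ln_lip pY pX h2.
have -> : - N^-1 * ln tX - - N^-1 * ln tY = N^-1 * (ln tY - ln tX) by ring.
rewrite ler_pdivrMl //; lra.
Qed.

Lemma psi_half n (N : R) (A B : 'M[C]_n) : (0 < n)%N -> 0 < N -> selfadj A -> selfadj B ->
  psiN N A - psiN N B <= opnorm (A - B).
Proof.
move=> hn hN hA hB.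
have e : - (N%:C) = (- N)%:C :> C by rewrite rmorphN.
have hX : selfadj (- (N%:C) *: A) by rewrite e; exact: selfadj_scale.
have hY : selfadj (- (N%:C) *: B) by rewrite e; exact: selfadj_scale.
have hop : opnorm (- (N%:C) *: B - - (N%:C) *: A) <= N * opnorm (A - B).
  rewrite -scalerBr; apply: (le_trans (op_scale _ _)).
  rewrite e nc_real normrN (gtr0_norm hN) [opnorm (B - A)]op_subC; exact: lexx.
rewrite /psiN; apply: (psi_core hN (trexp_pos hn hX) (trexp_pos hn hY)).
apply: (le_trans (trexp_lip hX hY)).
apply: (ler_wpM2r (ltW (trexp_pos hn hX))); rewrite ler_expR; exact: hop.
Qed.

Lemma psi_lip n (N : R) (A B : 'M[C]_n) : (0 < n)%N -> 0 < N -> selfadj A -> selfadj B ->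
  `|psiN N A - psiN N B| <= opnorm (A - B).
Proof.
move=> hn hN hA hB; rewrite ler_norml psi_half // andbT.
by rewrite lerNl opprB op_subC psi_half.
Qed.

End P6.

Section P7.
Variable R : realType.
Local Notation C := R[i].

Lemma sum_enum (T : finType) (F : 'I_#|T| -> R) :
  \sum_p F p = \sum_(s : T) F (enum_rank s).
Proof.
rewrite (reindex enum_rank) //; exists enum_val => x _; [exact: enum_rankK | exact: enum_valK].
Qed.

Lemma sum_enumC (T : finType) (F : 'I_#|T| -> C) :
  \sum_p F p = \sum_(s : T) F (enum_rank s).
Proof.
rewrite (reindex enum_rank) //; exists enum_val => x _; [exact: enum_rankK | exact: enum_valK].
Qed.

Variables (nu L r d : nat).
Hypothesis hr : (r <= L.+1)%N.
Local Notation Site := {ffun 'I_nu -> 'I_L.+1}.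
Local Notation Box := {ffun 'I_nu -> 'I_r}.
Local Notation Cfg := {ffun Site -> 'I_d}.
Local Notation BCfg := {ffun Box -> 'I_d}.
Variable j : Site.

Lemma tpos_inj : injective (tpos j : Box -> Site).
Proof.
move=> b b' /ffunP h; apply/ffunP => k; move: (h k); rewrite !ffunE => /(congr1 val) /=.
move/eqP; rewrite eqn_modDl !modn_small => [/eqP e||]; last 2 first.
- exact: leq_trans (ltn_ord _) hr.
- exact: leq_trans (ltn_ord _) hr.
exact: val_inj.
Qed.

Definition key (s : Cfg) : {ffun Site -> option 'I_d} :=
  [ffun x => if x \in codom (tpos j : Box -> Site) then None else Some (s x)].

Definition glue (a : BCfg) (s0 : Cfg) : Cfg :=
  [ffun x => if [pick b | tpos j b == x] is Some b then a b else s0 x].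

Lemma agree_key (s t : Cfg) :
  [forall x, (x \notin codom (tpos (r := r) j)) ==> (s x == t x)] = (key s == key t).
Proof.
apply/idP/eqP.
  move=> /forallP h; apply/ffunP => x; rewrite !ffunE; case: ifP => // hx.
  by move/implyP: (h x); rewrite hx => /(_ isT) /eqP ->.
move=> /ffunP h; apply/forallP => x; apply/implyP => hx.
by move: (h x); rewrite !ffunE (negbTE hx) => -[->].
Qed.

Lemma glue_restr (a : BCfg) s0 : trestr r j (glue a s0) = a.
Proof.
apply/ffunP => b; rewrite !ffunE; case: pickP => [b' /eqP /tpos_inj -> //|hn].
by have := hn b; rewrite eqxx.
Qed.

Lemma key_glue (a : BCfg) s0 : key (glue a s0) = key s0.
Proof.
apply/ffunP => x; rewrite !ffunE; case: ifP => // hx.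
case: pickP => [b /eqP hb|hn] //.
by move: hx; rewrite -hb codom_f.
Qed.

Lemma glue_restr_eq (s s0 : Cfg) : key s = key s0 -> glue (trestr r j s) s0 = s.
Proof.
move=> /ffunP h; apply/ffunP => x; rewrite !ffunE.
case: pickP => [b /eqP <-|hn]; first by rewrite ffunE.
have hx : x \notin codom (tpos j : Box -> Site).
  apply/codomP => -[b hb]; by have := hn b; rewrite -hb eqxx.
by move: (h x); rewrite !ffunE (negbTE hx) => -[->].
Qed.

Lemma glue_glue (a b : BCfg) s0 : glue b (glue a s0) = glue b s0.
Proof.
apply/ffunP => x; rewrite !ffunE; case: pickP => [b' _|hn] //.
Qed.

Definition Tf (o : 'M[C]_(bdim nu r d)) (s t : Cfg) : C :=
  if key s == key t then o (enum_rank (trestr r j s)) (enum_rank (trestr r j t)) else 0.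

Lemma transl_entry o p q : transl o j p q = Tf o (enum_val p) (enum_val q).
Proof. by rewrite mxE /= agree_key. Qed.

Lemma inner_sum o (V : Cfg -> C) s :
  \sum_t Tf o s t * V t = \sum_(b : BCfg) o (enum_rank (trestr r j s)) (enum_rank b) * V (glue b s).
Proof.
rewrite /Tf.
transitivity (\sum_(t | key t == key s) o (enum_rank (trestr r j s)) (enum_rank (trestr r j t)) * V t).
  rewrite [RHS]big_mkcond /=; apply: eq_bigr => t _; rewrite eq_sym.
  by case: ifP => _; rewrite ?mul0r.
rewrite (reindex_onto (fun b => glue b s) (trestr r j)) /=; last first.
  by move=> t /eqP; apply: glue_restr_eq.
apply: eq_big => [b|b _]; first by rewrite key_glue glue_restr !eqxx.
by rewrite glue_restr.
Qed.

Lemma box_ineq (o : 'M[C]_(bdim nu r d)) (w : BCfg -> C) :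
  \sum_(a : BCfg) sq (\sum_(b : BCfg) o (enum_rank a) (enum_rank b) * w b)
    <= opnorm o ^+ 2 * \sum_b sq (w b).
Proof.
set wv : 'cV[C]_(bdim nu r d) := \col_q w (enum_val q).
have h1 : vnorm2 (o *m wv) = \sum_(a : BCfg) sq (\sum_(b : BCfg) o (enum_rank a) (enum_rank b) * w b).
  rewrite vnorm2E sum_enum; apply: eq_bigr => a _; rewrite mxE sum_enumC.
  by congr sq; apply: eq_bigr => b _; rewrite mxE enum_rankK.
have h2 : vnorm2 wv = \sum_b sq (w b).
  by rewrite vnorm2E sum_enum; apply: eq_bigr => b _; rewrite mxE enum_rankK.
rewrite -h1 -h2 -!nv_sq -exprMn; apply: sqr_le; first exact: nv_ge0.
exact: op_bound.
Qed.

Lemma mainT (o : 'M[C]_(bdim nu r d)) (V : Cfg -> C) :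
  \sum_s sq (\sum_t Tf o s t * V t) <= opnorm o ^+ 2 * \sum_s sq (V s).
Proof.
under eq_bigr do rewrite inner_sum.
rewrite (partition_big key xpredT) //= [in X in _ <= _ * X](partition_big key xpredT) //=.
rewrite mulr_sumr; apply: ler_sum => k _.
case: (pickP (fun s => key s == k)) => [s0 /eqP hs0 | hn]; last first.
  by rewrite !big_pred0 ?mulr0 // => s; exact: hn.
rewrite -hs0.
rewrite (reindex_onto (fun a => glue a s0) (trestr r j)) /=; last first.
  by move=> s /eqP; apply: glue_restr_eq.
rewrite [X in _ <= _ * X](reindex_onto (fun a => glue a s0) (trestr r j)) /=; last first.
  by move=> s /eqP; apply: glue_restr_eq.
under eq_bigl do rewrite key_glue glue_restr !eqxx.
under [X in _ <= _ * X]eq_bigl do rewrite key_glue glue_restr !eqxx.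
have E : forall a, sq (\sum_b o (enum_rank (trestr r j (glue a s0))) (enum_rank b) * V (glue b (glue a s0)))
   = sq (\sum_b o (enum_rank a) (enum_rank b) * V (glue b s0)).
  by move=> a; rewrite glue_restr; under eq_bigr do rewrite glue_glue.
under eq_bigr do rewrite E.
exact: (box_ineq o (fun b => V (glue b s0))).
Qed.

Lemma transl_bound (o : 'M[C]_(bdim nu r d)) : opnorm (transl o j) <= opnorm o.
Proof.
apply: op_le => v hv.
set V := fun t : Cfg => v (enum_rank t) 0.
have h1 : vnorm2 (transl o j *m v) = \sum_s sq (\sum_t Tf o s t * V t).
  rewrite vnorm2E sum_enum; apply: eq_bigr => s _; rewrite mxE sum_enumC.
  by congr sq; apply: eq_bigr => t _; rewrite transl_entry !enum_rankK.
have h2 : vnorm2 v = \sum_s sq (V s).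
  by rewrite vnorm2E sum_enum.
apply: sqrt_le; first exact: op_ge0.
rewrite h1; apply: (le_trans (mainT o V)); rewrite -h2.
rewrite -[X in _ <= X]mulr1; apply: ler_wpM2l => //; exact: sqr_ge0.
Qed.

End P7.

Lemma Xhat_bound (R : realType) (nu L r d : nat) (o : 'M[R[i]]_(bdim nu r d)) :
  (r <= L.+1)%N -> opnorm (Xhat L o) <= Nsites R nu L * opnorm o.
Proof.
move=> hr; rewrite /Xhat; apply: (le_trans (op_sum _ _ _)).
apply: (le_trans (ler_sum _ (fun j _ => transl_bound hr j o))).
rewrite sumr_const /Nsites card_ffun !card_ord mulr_natl; exact: lexx.
Qed.

Section P8.
Variable R : realType.
Local Notation C := R[i].

Lemma word_bound m n (a : 'I_m -> 'M[C]_n) (M : R) : 0 <= M ->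
  (forall i, opnorm (a i) <= M) -> forall w, opnorm (ncword a w) <= M ^+ size w.
Proof.
move=> M0 ha; elim => [|k w IH] /=; first by rewrite expr0; exact: op1.
apply: (le_trans (op_mul _ _)); rewrite exprS; apply: ler_pM => //; exact: op_ge0.
Qed.

Lemma word_diff m n (a b : 'I_m -> 'M[C]_n) (M e : R) : 1 <= M ->
  (forall i, opnorm (a i) <= M) -> (forall i, opnorm (b i) <= M) ->
  (forall i, opnorm (a i - b i) <= e) ->
  forall w, opnorm (ncword a w - ncword b w) <= (size w)%:R * M ^+ size w * e.
Proof.
move=> M1 ha hb hab.
have M0 : 0 <= M by apply: le_trans M1.
have e0 : forall i : 'I_m, 0 <= e.
  move=> i; have := hab i; apply: le_trans; exact: op_ge0.
elim => [|k w IH] /=; first by rewrite subrr op0 !mul0r.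
have -> : a k *m ncword a w - b k *m ncword b w =
  (a k - b k) *m ncword a w + b k *m (ncword a w - ncword b w).
  by rewrite mulmxBl mulmxBr addrA subrK.
apply: (le_trans (op_add _ _)).
have h1 : opnorm ((a k - b k) *m ncword a w) <= e * M ^+ size w.
  apply: (le_trans (op_mul _ _)); apply: ler_pM; try exact: op_ge0.
  exact: hab. exact: word_bound.
have h2 : opnorm (b k *m (ncword a w - ncword b w)) <= M * ((size w)%:R * M ^+ size w * e).
  apply: (le_trans (op_mul _ _)); apply: ler_pM; try exact: op_ge0.
  exact: hb. exact: IH.
apply: (le_trans (lerD h1 h2)).
have hMs : 0 <= M ^+ size w by exact: exprn_ge0.
have ee := e0 k.
rewrite exprS -natr1.
set s := (size w)%:R; set p := M ^+ size w.
have hs : 0 <= s by exact: ler0n.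
have : 0 <= (M - 1) * p * e by rewrite mulr_ge0 // mulr_ge0 // subr_ge0.
move=> H.
have eq : (s + 1) * (M * p) * e - (e * p + M * (s * p * e)) = (M - 1) * p * e by ring.
by rewrite -subr_ge0 eq.
Qed.

Lemma eval_diff m n (eta : ncpoly R m) (a b : 'I_m -> 'M[C]_n) (M e : R) : 1 <= M ->
  (forall i, opnorm (a i) <= M) -> (forall i, opnorm (b i) <= M) ->
  (forall i, opnorm (a i - b i) <= e) ->
  opnorm (nceval eta a - nceval eta b) <=
    (\sum_(t <- eta) `|t.1| * (size t.2)%:R * M ^+ size t.2) * e.
Proof.
move=> M1 ha hb hab; rewrite /nceval -sumrB mulr_suml.
apply: (le_trans (op_sum _ _ _)); apply: ler_sum => t _.
rewrite -scalerBr; apply: (le_trans (op_scale _ _)); rewrite nc_real -!mulrA.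
apply: ler_wpM2l => //; rewrite mulrA; exact: word_diff.
Qed.

Lemma selfadj1 n : selfadj (1%:M : 'M[C]_n).
Proof.
rewrite /selfadj; apply/matrixP => i j; rewrite !mxE eq_sym.
case: (i == j) => /=; [exact: conjc1 | exact: conjc0].
Qed.

Lemma selfadj0 n : selfadj (0 : 'M[C]_n).
Proof. by rewrite /selfadj; apply/matrixP => i j; rewrite !mxE conjc0. Qed.

Lemma word_sa m n (b : 'I_m -> 'M[C]_n) : (forall i, selfadj (b i)) ->
  (forall i k, b i *m b k = b k *m b i) ->
  forall w, selfadj (ncword b w) /\ forall k, b k *m ncword b w = ncword b w *m b k.
Proof.
move=> hs hc; elim => [|k w [IH1 IH2]] /=.
  by split; [exact: selfadj1 | move=> k; rewrite mulmx1 mul1mx].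
split.
  by rewrite /selfadj adj_mul IH1 hs IH2.
move=> k'; by rewrite mulmxA hc -mulmxA IH2 mulmxA.
Qed.

Lemma eval_sa m n (eta : ncpoly R m) (b : 'I_m -> 'M[C]_n) : (forall i, selfadj (b i)) ->
  (forall i k, b i *m b k = b k *m b i) -> selfadj (nceval eta b).
Proof.
move=> hs hc; rewrite /nceval.
apply: (big_ind (fun M => selfadj M)); first exact: selfadj0.
  by move=> x y; apply: selfadj_add.
move=> t _; apply: selfadj_scale; exact: (word_sa hs hc t.2).1.
Qed.

End P8.

Unset Implicit Arguments.
Theorem theorem1 (R : realType) (nu d r m : nat) (Hnu : (0 < nu)%N) (Hd : (0 < d)%N)
  (o : 'I_m -> 'M[R[i]]_(bdim nu r d))
  (Ho : forall i, selfadj (o i))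
  (Xc : forall L : nat, 'I_m -> 'M[R[i]]_(hdim nu L.+1 d))
  (HXc_sa : forall L i, selfadj (Xc L i))
  (HXc_comm : forall L i k, Xc L i *m Xc L k = Xc L k *m Xc L i)
  (HXc_norm : forall i,
     (fun L => opnorm (Xhat L (o i) - Xc L i)) @ \oo --> (0 : R))
  (eta : ncpoly R m)
  (Heta : forall L : nat, (r <= L.+1)%N ->
     selfadj (nceval eta (fun i => ((Nsites R nu L)^-1)%:C *: Xhat L (o i))))
  (lh lc : R)
  (Hh : (fun L => psiN (Nsites R nu L)
           (nceval eta (fun i => ((Nsites R nu L)^-1)%:C *: Xhat L (o i)))) @ \oo --> lh)
  (Hc : (fun L => psiN (Nsites R nu L)
           (nceval eta (fun i => ((Nsites R nu L)^-1)%:C *: Xc L i))) @ \oo --> lc) :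
  lh = lc.
Proof.
have N1 : forall L, 1 <= Nsites R nu L.
  by move=> L; rewrite /Nsites ler1n expn_gt0.
have Npos : forall L, 0 < Nsites R nu L.
  by move=> L; apply: lt_le_trans (N1 L).
have hn : forall L, (0 < hdim nu L.+1 d)%N.
  by move=> L; rewrite /hdim card_ffun card_ord expn_gt0 Hd.
set M := 1 + \sum_i opnorm (o i).
set E := fun L => \sum_i opnorm (Xhat L (o i) - Xc L i).
set K := \sum_(t <- eta) `|t.1| * (size t.2)%:R * M ^+ size t.2.
have E0 : E L @[L --> \oo] --> 0.
  rewrite (_ : 0 = \sum_(i < m) (0 : R)); last by rewrite big1.
  apply: cvg_sumR => i; exact: (HXc_norm i).
have opo : forall i, opnorm (o i) <= \sum_i opnorm (o i).
  move=> i; rewrite (bigD1 i) //= lerDl; apply: sumr_ge0 => k _; exact: op_ge0.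
have hkey : forall L, (r <= L.+1)%N -> E L <= 1 ->
   `|psiN (Nsites R nu L) (nceval eta (fun i => ((Nsites R nu L)^-1)%:C *: Xhat L (o i))) -
     psiN (Nsites R nu L) (nceval eta (fun i => ((Nsites R nu L)^-1)%:C *: Xc L i))|
   <= K * E L.
  move=> L hr hE.
  set Nn := Nsites R nu L.
  have hNi : 0 <= Nn^-1 by rewrite invr_ge0; exact: ltW (Npos L).
  have hNi1 : Nn^-1 <= 1.
    by rewrite (invr_le1 _ (Npos L)) ?(N1 L) // unitfE (gt_eqF (Npos L)).
  have ha : forall i, opnorm ((Nn^-1)%:C *: Xhat L (o i)) <= opnorm (o i).
    move=> i; apply: (le_trans (op_scale _ _)); rewrite nc_real (ger0_norm hNi).
    rewrite ler_pdivrMl; [exact: (@Xhat_bound R nu L r d (o i) hr) | exact: Npos L].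
  have hab : forall i, opnorm ((Nn^-1)%:C *: Xhat L (o i) - (Nn^-1)%:C *: Xc L i) <= E L.
    move=> i; rewrite -scalerBr; apply: (le_trans (op_scale _ _)).
    rewrite nc_real (ger0_norm hNi).
    apply: (le_trans (y := opnorm (Xhat L (o i) - Xc L i))).
      rewrite -[X in _ <= X]mul1r; apply: ler_wpM2r => //; exact: op_ge0.
    rewrite /E (bigD1 i) //= lerDl; apply: sumr_ge0 => k _; exact: op_ge0.
  have hb : forall i, opnorm ((Nn^-1)%:C *: Xc L i) <= M.
    move=> i.
    have -> : (Nn^-1)%:C *: Xc L i = (Nn^-1)%:C *: Xhat L (o i) -
        ((Nn^-1)%:C *: Xhat L (o i) - (Nn^-1)%:C *: Xc L i).
      by rewrite opprB addrC subrK.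
    apply: (le_trans (op_add _ _)).
    rewrite (op_opp ((Nn^-1)%:C *: Xhat L (o i) - (Nn^-1)%:C *: Xc L i)).
    apply: (le_trans (lerD (ha i) (hab i))).
    have := opo i; rewrite /M; move: (opnorm (o i)) (\sum_i opnorm (o i)) => x y hxy.
    by move: hE; lra.
  have ha' : forall i, opnorm ((Nn^-1)%:C *: Xhat L (o i)) <= M.
    move=> i; apply: (le_trans (ha i)); apply: (le_trans (opo i)); rewrite /M lerDr; exact: ler01.
  have M1 : 1 <= M.
    rewrite /M lerDl; apply: sumr_ge0 => k _; exact: op_ge0.
  apply: (le_trans (psi_lip (hn L) (Npos L) (Heta L hr) _)).
    apply: eval_sa => [i|i k]; first exact: selfadj_scale.
    by rewrite -!scalemxAl -!scalemxAr HXc_comm.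
  exact: (eval_diff eta M1 ha' hb hab).
set ph := fun L => psiN (Nsites R nu L)
    (nceval eta (fun i => ((Nsites R nu L)^-1)%:C *: Xhat L (o i))).
set pc := fun L => psiN (Nsites R nu L)
    (nceval eta (fun i => ((Nsites R nu L)^-1)%:C *: Xc L i)).
have D : (ph L - pc L) @[L --> \oo] --> lh - lc by apply: cvgB.
have D0 : (ph L - pc L) @[L --> \oo] --> 0.
  apply: (@squeeze_cvgr _ _ _ _ (fun L => - (K * E L)) (fun L => K * E L)).
  - have h1 : \forall L \near \oo, (r <= L.+1)%N.
      by exists r => // L /= hL; exact: leqW.
    have h2 : \forall L \near \oo, `|0 - E L| < 1 by apply: cvgr_dist_lt.
    move: h1 h2; apply: filterS2 => L hr H.
    have hE : E L <= 1.
      move: H; rewrite sub0r normrN => H.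
      apply: (le_trans (ler_norm _)); exact: (ltW H).
    have := hkey L hr hE; rewrite ler_norml => /andP[H1 H2].
    by rewrite H1 H2.
  - rewrite -oppr0 -(mulr0 K); apply: cvgN; apply: cvgMr; exact: E0.
  - rewrite -(mulr0 K); apply: cvgMr; exact: E0.
have : lh - lc = 0 by apply: (cvg_unique _ D D0).
by move/eqP; rewrite subr_eq0 => /eqP.
Qed.
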